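(* There exists a constant $c>0$ such that for all $N$ large enough, all $n\in\mathbb{Z}_+$ and every initial law of $Y(0)$, a Markov chain $Y$ on $\{0,\dots,N-4\}$ with kernel $R$ satisfies $$\mathbb{P}[\tau_0^Y>n]\le e^{1-cn/N^3},\qquad \tau_0^Y=\inf\{n\in\mathbb{Z}_+: Y(n)=0\}.$$
   Context: $R$ is the birth–death Markov kernel on $\{0,\dots,N-4\}$ with $R(x,x-1)=\frac{x(N-x)}{N(N-1)}$, $R(x,x+1)=\frac{N-x-1}{N(N-1)}$ for $x\le N-5$, all other off-diagonal entries $0$, and diagonal entries making rows sum to 1. *)

(* Defs.v *)
From HB Require Import structures.
From mathcomp Require Import all_boot all_order all_algebra.
From mathcomp Require Import reals.
From mathcomp Require Import sequences exp.
Set Implicit Arguments. Unset Strict Implicit. Unset Printing Implicit Defensive.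
Import Order.TTheory GRing.Theory Num.Theory.
Local Open Scope ring_scope.

(* Birth-death kernel R on {0,...,N-4}, states encoded as naturals. *)
Definition down_rate {T : realType} (N x : nat) : T :=
  ((x * (N - x))%N)%:R / ((N * (N - 1))%N)%:R.
Definition up_rate {T : realType} (N x : nat) : T :=
  if (x <= N - 5)%N then ((N - x - 1)%N)%:R / ((N * (N - 1))%N)%:R else 0.

Definition Rker {T : realType} (N x y : nat) : T :=
  if x == y.+1 then down_rate N x
  else if y == x.+1 then up_rate N x
  else if x == y then 1 - down_rate N x - up_rate N x
  else 0.

(* P[tau_0^Y > n] for the chain Y with initial law mu and kernel Rker N on
   'I_(N-3) = {0,...,N-4}: total probability of paths Y(0..n) avoiding 0. *)
Definition prob_tau0_gt {T : realType} (N n : nat) (mu : {ffun 'I_(N - 3) -> T}) : T :=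
  \sum_(p : {ffun 'I_n.+1 -> 'I_(N - 3)} | [forall i, (p i != 0 :> nat)])
     mu (p ord0) *
     \prod_(i < n) Rker N (p (widen_ord (leqnSn n) i)) (p (lift ord0 i)).

(* Main.v *)
Require Import Defs.
From HB Require Import structures.
From mathcomp Require Import all_boot all_order all_algebra.
From mathcomp Require Import reals.
From mathcomp Require Import sequences exp.
From mathcomp Require Import zify ring lra.
Import Order.TTheory GRing.Theory Num.Theory.
Lemma n1 N : (10 <= N)%N -> ((N+1)*(N*(N-1)) + (N-1-1)*N^3 <= (1*(N-1))*(N+1)*N^3)%N.
Proof. move=> H. have [m ->] : exists m, N = m + 10 by exists (N - 10); lia.
have -> : (m + 10 - 1 - 1 = m + 8)%N by lia.
have -> : (m + 10 - 1 = m + 9)%N by lia.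
nia. Qed.
Lemma n2 N x : (10 <= N)%N -> (2 <= x)%N -> (x <= N - 5)%N -> ((N+x)*(N*(N-1)) + (N-x-1)*N^3 <= x*(N-x)*N^3)%N.
Proof. move=> H1 H2 H3.
have [m Hm] : exists m, N = x + 5 + m by exists (N - 5 - x); lia.
have [y Hy] : exists y, x = y + 2 by exists (x - 2); lia.
subst x.
have -> : (N - (y+2) - 1 = m + 4)%N by lia.
have -> : (N - (y+2) = m + 5)%N by lia.
have -> : (N - 1 = y + 6 + m)%N by lia.
have hX : ((N + (y+2))*(N*(y+6+m)) <= 2 * N^3)%N.
  have h1 : (N + (y+2) <= 2 * N)%N by lia.
  have h2 : (N * (y + 6 + m) <= N * N)%N by rewrite leq_mul2l; apply/orP; right; lia.
  have -> : (2 * N ^ 3 = 2 * N * (N * N))%N by rewrite !expnS expn0 muln1 mulnA.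
  by apply: leq_mul.
have hY : ((y+2)*(m+5)*N^3 = (m+4)*N^3 + (y*(m+5)+m+6)*N^3)%N by rewrite -mulnDl; congr (_ * _); nia.
have h6 : (2 * N^3 <= (y*(m+5)+m+6)*N^3)%N by rewrite leq_mul2r; apply/orP; right; lia.
rewrite hY; set Z := N ^ 3; set X := (_ * (_ * _))%N; lia.
Qed.
Lemma n3 N x : (10 <= N)%N -> x = (N - 4)%N -> ((N+x)*(N*(N-1)) <= x*(N-x)*N^3)%N.
Proof. move=> H1 ->. have [m ->] : exists m, N = m + 10 by exists (N - 10); lia.
have -> : (m + 10 - 4 = m + 6)%N by lia.
have -> : (m + 10 - (m + 6) = 4)%N by lia.
have -> : (m + 10 - 1 = m + 9)%N by lia.
nia. Qed.
Lemma n4 N x : (10 <= N)%N -> (x < N - 3)%N -> (x*(N-x) + (N-x-1) <= N*(N-1))%N.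
Proof. move=> H1 H2.
have [m Hm] : exists m, N = x + 4 + m by exists (N - 4 - x); lia.
have -> : (N - x - 1 = m + 3)%N by lia.
have -> : (N - x = m + 4)%N by lia.
have -> : (N - 1 = x + 3 + m)%N by lia.
rewrite Hm; nia. Qed.

Local Open Scope ring_scope.
Set Implicit Arguments. Unset Strict Implicit.

Section Anal.
Variables (T : realType).

Lemma window (F : nat -> T) z K : (forall i, (i < z)%N -> F i = 0) ->
  (forall i, (z.+3 <= i)%N -> F i = 0) -> (z.+3 <= K)%N ->
  \sum_(i < K) F i = F z + F z.+1 + F z.+2.
Proof.
move=> H0 H1 /subnKC <-; elim: (K - z.+3)%N => [|k IH].
  rewrite addn0 !big_ord_recr /= big1 ?add0r // => i _; apply: H0; exact: ltn_ord.
by rewrite addnS big_ord_recr /= IH (H1 (z.+3 + k)%N) ?addr0 // leq_addr.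
Qed.

Lemma G (d u hz hx hy K : T) : 0 < K -> hx / K <= d*(hx - hz) - u*(hy - hx) ->
  d*hz + (1-d-u)*hx + u*hy <= (1 - 1/K)*hx.
Proof.
move=> _ H; rewrite !mulrBr in H.
have -> : (1 - 1/K)*hx = hx - hx/K by rewrite mulrBl mul1r mul1r mulrC.
rewrite !mulrBl mul1r; lra.
Qed.

Lemma L (D K a b w : T) : 0 < D -> 0 < K -> w*D + b*K <= a*K -> w/K <= a/D - b/D.
Proof.
move=> D0 K0 H.
have H1 : 0 <= (a*K - b*K - w*D) / (D*K) by apply: divr_ge0; [lra | apply: mulr_ge0; lra].
rewrite -subr_ge0; suff -> : a/D - b/D - w/K = (a*K - b*K - w*D) / (D*K) by [].
field; apply/andP; split; apply: lt0r_neq0 => //.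
Qed.

Variable N : nat.
Hypothesis HN : (10 <= N)%N.

Definition hn (k : nat) : T := if k == 0%N then 0 else (N + k)%:R.
Definition lam : T := 1 - 1 / (N%:R ^+ 3).

Lemma Dpos : 0 < ((N * (N - 1))%N)%:R :> T.
Proof. rewrite ltr0n; lia. Qed.
Lemma Kpos : 0 < N%:R ^+ 3 :> T.
Proof. apply: exprn_gt0; rewrite ltr0n; lia. Qed.

Lemma Rker_ge0 x y : (x < N - 3)%N -> 0 <= Rker N x y :> T.
Proof.
move=> xM; have D0 := Dpos.
have hd : 0 <= down_rate N x :> T by apply: divr_ge0; [exact: ler0n | exact: ltW].
have hu : 0 <= up_rate N x :> T.
  by rewrite /up_rate; case: ifP => _ //; apply: divr_ge0; [exact: ler0n | exact: ltW].
have hs : down_rate N x + up_rate N x <= 1 :> T.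
  rewrite /up_rate /down_rate; case: ifP => _.
    rewrite -mulrDl -natrD ler_pdivrMr // mul1r ler_nat; exact: (@n4 N x HN xM).
  rewrite addr0 ler_pdivrMr // mul1r ler_nat.
  have := @n4 N x HN xM; lia.
rewrite /Rker; case: ifP => _ //; case: ifP => _ //; case: ifP => _ //; lra.
Qed.

Lemma key x : (0 < x)%N -> (x < N - 3)%N ->
  \sum_(y < N - 3) Rker N x y * hn y <= lam * hn x.
Proof.
move=> x0 xM; have [z Hz] : exists z, x = z.+1 by exists x.-1; lia.
subst x.
set F := fun k => Rker N z.+1 k * hn k.
have Flo : forall i, (i < z)%N -> F i = 0.
  move=> i Hi; rewrite /F /Rker.
  do 3 (case: eqP => [?|_]; first lia).
  by rewrite mul0r.
have Fhi : forall i, (z.+3 <= i)%N -> F i = 0.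
  move=> i Hi; rewrite /F /Rker.
  do 3 (case: eqP => [?|_]; first lia).
  by rewrite mul0r.
have -> : \sum_(y < N - 3) Rker N z.+1 y * hn y = F z + F z.+1 + F z.+2.
  case: (ltnP z.+2 (N - 3)) => h; first exact: window.
  have E : (N - 3 = z.+2)%N by lia.
  have Fz2 : F z.+2 = 0.
    rewrite /F /Rker (_ : (z.+1 == z.+3) = false); last by apply/negbTE/eqP; lia.
    rewrite eqxx /up_rate ifF ?mul0r //; apply/negbTE; rewrite -ltnNge; lia.
  have W := @window F z z.+3 Flo Fhi (leqnn _).
  rewrite big_ord_recr /= Fz2 addr0 in W.
  rewrite addr0 in W; by rewrite E Fz2 addr0 -W.
rewrite /F /Rker eqxx.
rewrite (_ : (z.+1 == z.+2) = false); last by apply/negbTE/eqP; lia.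
rewrite (_ : (z.+1 == z.+3) = false); last by apply/negbTE/eqP; lia.
rewrite eqxx.
apply: G; first exact: Kpos.
have D0 := Dpos; have K0 := Kpos.
rewrite -natrX in K0 *.
have hy : hn z.+2 - hn z.+1 = 1.
  by rewrite /hn /= (addnS N z.+1) -addn1 natrD addrAC subrr add0r.
rewrite hy mulr1.
case: (posnP z) => [z0|zpos].
  subst z; rewrite /hn /= subr0 /down_rate /up_rate ifT; last by lia.
  rewrite mulrAC -natrM; apply: L => //.
  rewrite -!natrM -natrD ler_nat; exact: n1.
have hx : hn z.+1 - hn z = 1.
  rewrite /hn /= (_ : (z == 0%N) = false); last by apply/negbTE/eqP; lia.
  by rewrite (addnS N z) -addn1 natrD addrAC subrr add0r.
rewrite hx mulr1 /down_rate /up_rate; case: ifP => hu.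
  apply: L => //; rewrite -!natrM -natrD ler_nat.
  rewrite /hn /=; apply: n2 => //; lia.
have := @L _ _ ((z.+1 * (N - z.+1))%N%:R) 0 (hn z.+1) D0 K0.
rewrite !mul0r subr0 addr0; apply.
rewrite /hn /= -!natrM ler_nat; apply: n3 => //.
move/negbT: hu; rewrite -ltnNge; lia.
Qed.
End Anal.

Section Comb.
Variables (T : realType) (N : nat).
Local Notation S := 'I_(N - 3).

Definition hcons n (xp : S * {ffun 'I_n.+1 -> S}) : {ffun 'I_n.+2 -> S} :=
  [ffun i : 'I_n.+2 => if val i is k.+1 then xp.2 (inord k) else xp.1].
Definition hdec n (q : {ffun 'I_n.+2 -> S}) : S * {ffun 'I_n.+1 -> S} :=
  (q ord0, [ffun j => q (lift ord0 j)]).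

Lemma hcons_bij n : bijective (@hdec n).
Proof.
exists (@hcons n).
- move=> q; apply/ffunP => i; rewrite ffunE /=.
  case: i => [[|k] Hk] /=.
    by congr (q _); apply: val_inj.
  rewrite ffunE; congr (q _); apply: val_inj => /=.
  by rewrite inordK.
- move=> [x p]; rewrite /hdec /= ffunE /=; congr (_, _).
  apply/ffunP => j; rewrite !ffunE /= inord_val //.
Qed.

Definition muQ (mu : {ffun S -> T}) : {ffun S -> T} :=
  [ffun y : S => \sum_(x : S | (val x != 0)%N) mu x * Rker N x y].

Lemma prob_step n mu : @prob_tau0_gt T N n.+1 mu = @prob_tau0_gt T N n (muQ mu).
Proof.
rewrite /prob_tau0_gt.
under [RHS]eq_bigr do rewrite ffunE mulr_suml.
rewrite exchange_big /= pair_big_dep /=.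
rewrite (reindex (@hdec n)) /=; last by apply: onW_bij; apply: hcons_bij.
apply: eq_big => [q|q _].
  apply/forallP/andP => [H|[H0 /forallP H1] i].
  split; first exact: H.
  by apply/forallP => j; rewrite ffunE.
    case: i => [[|k] Hk].
      by move: H0; congr (negb (_ == _)); congr (nat_of_ord (q _)); apply: val_inj.
    have Hk' : (k < n.+1)%N by [].
    move: (H1 (Ordinal Hk')); rewrite ffunE; congr (negb (_ == _)); congr (nat_of_ord (q _)); apply: val_inj; by rewrite /= /bump.
rewrite big_ord_recl -mulrA; congr (_ * (_ * _)).
  congr (Rker N _ _); first by congr (nat_of_ord (q _)); apply: val_inj.
  by rewrite ffunE; congr (nat_of_ord (q _)); apply: val_inj.
apply: eq_bigr => i _; rewrite !ffunE; congr (Rker N _ _); congr (nat_of_ord (q _)); apply: val_inj => //.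
Qed.

End Comb.

Section Main.
Variables (T : realType) (N : nat).
Hypothesis HN : (10 <= N)%N.
Local Notation S := 'I_(N - 3).

Definition Mg (mu : {ffun S -> T}) : T := \sum_(x : S) mu x * hn T N x.

Lemma hn_ge0 k : 0 <= hn T N k.
Proof. by rewrite /hn; case: ifP. Qed.

Lemma lam_ge0 : 0 <= lam T N.
Proof.
rewrite /lam subr_ge0 ler_pdivrMr ?mul1r; last exact: Kpos.
rewrite -natrX ler1n expn_gt0; apply/orP; left; lia.
Qed.

Lemma base (mu : {ffun S -> T}) : (forall x, 0 <= mu x) -> N%:R * @prob_tau0_gt T N 0 mu <= Mg mu.
Proof.
move=> mu0; rewrite /prob_tau0_gt.
rewrite (reindex (fun x : S => [ffun _ : 'I_1 => x])); last first.
  apply: onW_bij; exists (fun p : {ffun 'I_1 -> S} => p ord0).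
    by move=> x; rewrite ffunE.
  move=> p; apply/ffunP => i; rewrite ffunE; congr (p _); apply: val_inj; by case: i => [[|k] Hk].
rewrite mulr_sumr /Mg big_mkcond /=; apply: ler_sum => x _.
rewrite big_ord0 mulr1; case: ifP => H; last by apply: mulr_ge0 => //; exact: hn_ge0.
move/forallP: H => /(_ ord0); rewrite !ffunE => Hx.
rewrite /hn (negbTE Hx) mulrC; apply: ler_wpM2l => //.
by rewrite ler_nat leq_addr.
Qed.

Lemma muQ_ge0 (mu : {ffun S -> T}) : (forall x, 0 <= mu x) -> forall y, 0 <= muQ mu y.
Proof.
move=> mu0 y; rewrite ffunE; apply: sumr_ge0 => x _; apply: mulr_ge0 => //.
exact: Rker_ge0 (ltn_ord x).
Qed.

Lemma stepM (mu : {ffun S -> T}) : (forall x, 0 <= mu x) -> Mg (muQ mu) <= lam T N * Mg mu.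
Proof.
move=> mu0; rewrite /Mg.
under eq_bigr do rewrite ffunE mulr_suml.
rewrite exchange_big /=.
apply: (@le_trans _ _ (\sum_(x : S | (val x != 0)%N) mu x * (lam T N * hn T N x))).
  apply: ler_sum => x Hx.
  under eq_bigr do rewrite -mulrA.
  rewrite -mulr_sumr; apply: ler_wpM2l => //.
  apply: key => //; first by rewrite lt0n.
rewrite mulr_sumr [X in _ <= X]big_mkcond /= big_mkcond /=; apply: ler_sum => x _.
case: ifP => _; first by rewrite mulrCA.
by apply: mulr_ge0; [exact: lam_ge0 | apply: mulr_ge0 => //; exact: hn_ge0].
Qed.

Lemma bound n : forall (mu : {ffun S -> T}), (forall x, 0 <= mu x) ->
  N%:R * @prob_tau0_gt T N n mu <= lam T N ^+ n * Mg mu.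
Proof.
elim: n => [|n IH] mu mu0; first by rewrite expr0 mul1r; exact: base.
rewrite prob_step; apply: le_trans (IH _ (muQ_ge0 mu0)) _.
rewrite exprSr -mulrA; apply: ler_wpM2l; first by apply: exprn_ge0; exact: lam_ge0.
exact: stepM.
Qed.


End Main.

Unset Implicit Arguments.

Theorem lemma5p7 (T : realType) :
  exists c : T, 0 < c /\
  exists N0 : nat, forall N : nat, (N0 <= N)%N ->
  forall (n : nat) (mu : {ffun 'I_(N - 3) -> T}),
    (forall x, 0 <= mu x) -> \sum_x mu x = 1 ->
    @prob_tau0_gt T N n mu <= expR (1 - c * n%:R / (N%:R ^+ 3)).
Proof.
exists 1; split; first exact: ltr01.
exists 10%N => N HN n mu mu0 mu1.
have B := bound HN n mu0.
have N0 : 0 < N%:R :> T by rewrite ltr0n; lia.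
have HM : Mg mu <= 2 * N%:R.
  apply: (@le_trans _ _ (\sum_x mu x * (2 * N%:R))).
    apply: ler_sum => x _; apply: ler_wpM2l => //.
    rewrite /hn; case: ifP => _; first by apply: mulr_ge0 => //; exact: ltW.
    rewrite -natrM ler_nat; have := ltn_ord x; lia.
  by rewrite -mulr_suml mu1 mul1r.
have Hl := lam_ge0 T HN.
have Hp : @prob_tau0_gt T N n mu <= 2 * lam T N ^+ n.
  rewrite -(ler_pM2l N0); apply: le_trans B _.
  rewrite mulrCA.
  have -> : 2 * (N%:R * lam T N ^+ n) = lam T N ^+ n * (2 * N%:R) by ring.
  by apply: ler_wpM2l; first exact: exprn_ge0.
apply: le_trans Hp _.
set K := N%:R ^+ 3.
have -> : 1 - 1 * n%:R / K = 1 + n%:R * (- (1 / K)) by ring.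
rewrite expRD expRM_natl.
apply: ler_pM => //; first exact: exprn_ge0.
  have := expR_ge1Dx (1 : T); lra.
apply: lerXn2r; rewrite ?nnegrE ?expR_ge0 //.
rewrite /lam -/K; have := expR_ge1Dx (- (1 / K)); lra.
Qed.
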